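(* Let $H\in(1/2,1)$, $T>0$, and let $S^H$ be a sub-fractional Brownian motion with index $H$. Then for every $\delta\in(0,T/2]$, $$\sup_{\delta\le s\le T-\delta}\sup_{0<h\le\delta}\Big|\frac{\sigma^2_{S^H}(s,s+h)}{h^{2H}}-1\Big|\ge H(2H-1)(2^{2H-1}-1)\,3^{2H-2}>0.$$
   Context: A sub-fractional Brownian motion with index $H\in(0,1)$ is a mean zero Gaussian process $(S^H_t)_{t\ge0}$ with covariance $G_H(s,t)=s^{2H}+t^{2H}-\tfrac12[(s+t)^{2H}+|s-t|^{2H}]$; its incremental variance is $\sigma^2_{S^H}(s,t)=\mathbb{E}|S^H_t-S^H_s|^2=|t-s|^{2H}+(s+t)^{2H}-2^{2H-1}(t^{2H}+s^{2H})$. *)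

(* Defs.v *)
From Stdlib Require Import Reals.
Open Scope R_scope.

(* x^a for real exponent a; only used with x > 0 here. *)
Definition rpow (x a : R) : R := Rpower x a.

Definition sfbm_incr_var (H s t : R) : R :=
  rpow (Rabs (t - s)) (2 * H) + rpow (s + t) (2 * H)
  - rpow 2 (2 * H - 1) * (rpow t (2 * H) + rpow s (2 * H)).

(* Main.v *)
Require Import Defs.
From Stdlib Require Import Reals Lra.
From Coquelicot Require Import Coquelicot.
Open Scope R_scope.
Lemma d_pow (c0 s q x l : R) : 0 < c0 + s*x -> l = q * Rpower (c0+s*x) (q-1) * s ->
  is_derive (fun x => Rpower (c0 + s*x) q) x l.
Proof.
intros Hp ->.
apply is_derive_Reals.
apply (derivable_pt_lim_comp (fun x => c0 + s*x) (fun y => Rpower y q)).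
- apply is_derive_Reals. auto_derive; auto; ring.
- apply derivable_pt_lim_power; auto.
Qed.
Lemma mono (f df : R->R) a b : a <= b -> (forall x, a<=x<=b -> is_derive f x (df x)) ->
 (forall x, a<=x<=b -> 0 <= df x) -> f a <= f b.
Proof.
intros hab hd hp.
destruct (MVT_gen f a b df) as [c [hc e]].
- intros x hx. rewrite Rmin_left in hx by lra. rewrite Rmax_right in hx by lra. apply hd; lra.
- intros x hx. rewrite Rmin_left in hx by lra. rewrite Rmax_right in hx by lra.
  assert (H1 := proj1 (is_derive_Reals _ _ _) (hd x hx)). apply (derivable_continuous_pt f x (exist _ (df x) H1)).
- rewrite Rmin_left in hc by lra. rewrite Rmax_right in hc by lra.
  assert (0 <= df c * (b-a)) by (apply Rmult_le_pos; [apply hp; lra| lra]). lra.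
Qed.
Lemma pow_neg_ge y q : 0<y<=2 -> q<0 -> Rpower 2 q <= Rpower y q.
Proof.
intros hy hq. unfold Rpower.
destruct (Req_dec y 2) as [->|hne]; [lra|].
left. apply exp_increasing. assert (ln y < ln 2) by (apply ln_increasing; lra). nra.
Qed.
Lemma step1 p x : 1<p<2 -> 0<=x<=1/2 ->
  0 <= Rpower(3/2+1*x)(p-1) - Rpower(3/2+(-1)*x)(p-1) - 2*(p-1)*Rpower 2 (p-2)*x.
Proof.
intros hp hx.
set (m := fun x => Rpower(3/2+1*x)(p-1) - Rpower(3/2+(-1)*x)(p-1) - 2*(p-1)*Rpower 2 (p-2)*x).
change (0 <= m x).
assert (m 0 = 0) as m0. { unfold m. replace (3/2+1*0) with (3/2+(-1)*0) by ring. ring. }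
rewrite <- m0.
apply (mono m (fun x => (p-1)*Rpower(3/2+1*x)(p-1-1)*1 - (p-1)*Rpower(3/2+(-1)*x)(p-1-1)*(-1) - 2*(p-1)*Rpower 2 (p-2))); [lra| |].
- intros y hy. unfold m. apply (is_derive_minus (V:=R_NormedModule)). apply (is_derive_minus (V:=R_NormedModule)). apply d_pow; [lra|reflexivity]. apply d_pow; [lra|reflexivity]. auto_derive; [auto|ring].
- intros y hy. assert (A1 := pow_neg_ge (3/2+1*y) (p-1-1) ltac:(lra) ltac:(lra)). assert (A2 := pow_neg_ge (3/2+(-1)*y) (p-1-1) ltac:(lra) ltac:(lra)). replace (p-2) with (p-1-1) by ring. nra.
Qed.
Lemma step2 p : 1<p<2 ->
  p*(p-1)*Rpower 2 (p-2) / 4 <= Rpower 2 p + 1 - 2*Rpower (3/2) p.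
Proof.
intros hp.
set (c := p*(p-1)*Rpower 2 (p-2)).
set (k := fun x => Rpower(3/2+1*x) p + Rpower(3/2+(-1)*x) p - 2*Rpower (3/2) p - c*x*x).
assert (k 0 = 0) as k0. { unfold k. replace (3/2+1*0) with (3/2) by ring. replace (3/2+(-1)*0) with (3/2) by ring. ring. }
assert (k 0 <= k (1/2)).
{ apply (mono k (fun x => p*Rpower(3/2+1*x)(p-1)*1 + p*Rpower(3/2+(-1)*x)(p-1)*(-1) - 0 - 2*c*x)); [lra| |].
- intros y hy. unfold k. apply (is_derive_minus (V:=R_NormedModule)). apply (is_derive_minus (V:=R_NormedModule)).
  apply (is_derive_plus (V:=R_NormedModule)).
  apply d_pow; [lra|reflexivity]. apply d_pow; [lra|reflexivity]. auto_derive; [auto|ring]. auto_derive; [auto|ring].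
- intros y hy. assert (S := step1 p y hp ltac:(lra)). unfold c. nra. }
rewrite k0 in H. unfold k in H.
replace (3/2+1*(1/2)) with 2 in H by field. replace (3/2+(-1)*(1/2)) with 1 in H by field.
assert (Rpower 1 p = 1) as E1 by (unfold Rpower; rewrite ln_1, Rmult_0_r; apply exp_0).
rewrite E1 in H. unfold Rdiv. lra.
Qed.
Lemma bern x e : 1 <= x -> 0 <= e <= 1 -> Rpower x e <= 1 + e*(x-1).
Proof.
intros hx he.
set (h := fun y => 1 + e*(y-1) - Rpower (0+1*y) e).
assert (h 1 <= h x).
{ apply (mono h (fun y => 0 + e*(1-0) - e*Rpower(0+1*y)(e-1)*1)); [lra| |].
  - intros y hy. unfold h. apply (is_derive_minus (V:=R_NormedModule)). auto_derive; [auto|ring].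
    apply d_pow; [lra|reflexivity].
  - intros y hy. assert (Rpower (0+1*y) (e-1) <= 1).
    { unfold Rpower. assert (exp 0 = 1) as E0 by apply exp_0.
      assert (0 <= ln (0+1*y)) by (destruct (Req_dec (0+1*y) 1) as [E|E]; [rewrite E, ln_1; lra| left; pose proof (ln_increasing 1 (0+1*y)) as L; rewrite ln_1 in L; apply L; lra]).
      destruct (Req_dec ((e - 1) * ln (0 + 1 * y)) 0) as [Z|Z]. rewrite Z; lra.
      left. apply Rlt_le_trans with (exp 0); [apply exp_increasing| lra].
      assert ((e - 1) * ln (0 + 1 * y) <= 0) by nra. lra. }
    nra. }
unfold h in H. replace (0+1*1) with 1 in H by ring. replace (0+1*x) with x in H by ring.
assert (Rpower 1 e = 1) as E1 by (unfold Rpower; rewrite ln_1, Rmult_0_r; apply exp_0).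
rewrite E1 in H. lra.
Qed.

Theorem mainTheorem11 (H T : R) (hH : 1/2 < H < 1) (hT : 0 < T) :
  forall delta : R, 0 < delta <= T / 2 ->
    (forall M : R,
       (forall s h : R, delta <= s <= T - delta -> 0 < h <= delta ->
          Rabs (sfbm_incr_var H s (s + h) / rpow h (2 * H) - 1) <= M) ->
       H * (2 * H - 1) * (rpow 2 (2 * H - 1) - 1) * rpow 3 (2 * H - 2) <= M)
    /\ 0 < H * (2 * H - 1) * (rpow 2 (2 * H - 1) - 1) * rpow 3 (2 * H - 2).
Proof.
intros delta hd. unfold rpow.
set (p := 2*H).
assert (hp : 1 < p < 2) by (unfold p; lra).
set (X := Rpower 2 (p-1)).
set (Y := Rpower 3 (p-2)).
set (Z := Rpower (4/3) (1-(p-1))).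
assert (X1 : 1 < X).
{ unfold X. pose proof (Rpower_lt 2 0 (p-1)) as L; rewrite Rpower_O in L by lra; apply L; lra. }
assert (Y0 : 0 < Y) by (unfold Y, Rpower; apply exp_pos).
assert (Z0 : 0 < Z) by (unfold Z, Rpower; apply exp_pos).
assert (L4: ln 4 = 2*ln 2) by (replace 4 with (2*2) by lra; rewrite ln_mult by lra; ring).
assert (L43: ln (4/3) = 2*ln 2 - ln 3) by (unfold Rdiv; rewrite ln_mult, ln_Rinv, L4 by lra; ring).
assert (E4: exp (2*ln 2) = 4) by (replace (2*ln 2) with (ln 2 + ln 2) by ring; rewrite exp_plus, exp_ln by lra; lra).
assert (EY: Y * exp(2*ln 2) = X*X*Z).
{ unfold X, Y, Z, Rpower. rewrite <- !exp_plus. f_equal. rewrite L43. ring. }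
rewrite E4 in EY.
assert (BX := bern 2 (p-1) ltac:(lra) ltac:(lra)). fold X in BX.
assert (BZ := bern (4/3) (1-(p-1)) ltac:(lra) ltac:(lra)). fold Z in BZ.
assert (C0 : (X-1)*Z <= (p-1)*Z) by (apply Rmult_le_compat_r; lra).
assert (C0' : (p-1)*Z <= (p-1)*(1+(1-(p-1))*(4/3-1))) by (apply Rmult_le_compat_l; lra).
assert (C1 : (X-1)*Z <= 1) by nra.
assert (C2 : (X-1)*Y*4 <= X*X).
{ replace ((X-1)*Y*4) with ((X-1)*(Y*4)) by ring. rewrite EY.
  assert (0 < X*X) by nra. replace ((X-1)*(X*X*Z)) with (((X-1)*Z)*(X*X)) by ring. nra. }
split; [|apply Rmult_lt_0_compat; [apply Rmult_lt_0_compat; [apply Rmult_lt_0_compat|]|]; lra].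
intros M hM.
specialize (hM delta delta ltac:(lra) ltac:(lra)).
unfold sfbm_incr_var, rpow in hM. fold p in hM.
replace (Rabs (delta + delta - delta)) with delta in hM by (rewrite Rabs_right; lra).
set (D := Rpower delta p) in hM.
assert (D0 : 0 < D) by (unfold D, Rpower; apply exp_pos).
assert (E2p : Rpower 2 p = 2*X).
{ unfold X. replace p with ((p-1)+1) at 1 by ring. rewrite Rpower_plus, Rpower_1 by lra. ring. }
assert (E22 : Rpower 2 (p-2) = X/2).
{ unfold X. replace (p-1) with ((p-2)+1) by ring. rewrite Rpower_plus, Rpower_1 by lra. field. }
set (Q := Rpower (3/2) p).
assert (E3p : Rpower 3 p = 2*X*Q).
{ unfold Q. rewrite <- E2p. rewrite Rpower_mult_distr by lra. f_equal. field. }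
assert (Ed3 : Rpower (delta + (delta + delta)) p = 2*X*Q*D).
{ unfold D. rewrite <- E3p, Rpower_mult_distr by lra. f_equal. ring. }
assert (Ed2 : Rpower (delta + delta) p = 2*X*D).
{ unfold D. rewrite <- E2p, Rpower_mult_distr by lra. f_equal. ring. }
rewrite Ed3, Ed2 in hM. fold X in hM.
replace ((D + 2 * X * Q * D - X * (2 * X * D + D)) / D - 1) with (2*X*Q - 2*X*X - X) in hM by (field; lra).
assert (S2 := step2 p hp). rewrite E22, E2p in S2. fold Q in S2.
assert (A : - (2*X*Q - 2*X*X - X) <= Rabs (2*X*Q - 2*X*X - X)) by (rewrite <- Rabs_Ropp; apply Rle_abs).
assert (B : X * (p*(p-1)*(X/2)/4) <= X * (2*X + 1 - 2*Q)) by (apply Rmult_le_compat_l; lra).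
assert (Hp : H = p/2) by (unfold p; field).
rewrite Hp.
assert (0 < p*(p-1)) by nra.
nra.
Qed.
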